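(* Let $d\ge2$ and $n\ge2$, and consider the vector program $$\max\ \frac12\left(\frac{d-1}{d}\right)-\frac14\sum_{a=1}^{d^2-1}\frac{1}{\binom n2}\sum_{1\le u<v\le n}\langle x^a_u,x^a_v\rangle$$ over real vectors $x^a_u\in\mathbb R^{m}$ ($m$ arbitrary, $a\in[d^2-1]$, $u\in[n]$) subject to $\langle x^a_u,x^b_u\rangle=\frac2d\delta_{ab}$ for all $u$ and all $a,b$. Its optimal value equals $\frac{(d-1)(d+n)}{2d(n-1)}$.
   Context: This vector program is the level-two noncommutative sum-of-squares relaxation of Quantum Max-$d$-Cut on the unweighted complete graph $K_n$, written in terms of the Gram vectors $x^a_u$ of the generalized Gell-Mann observables $\Lambda^a_u$. *)

(* Defs.v *)
From HB Require Import structures.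
From mathcomp Require Import all_boot all_order all_algebra.
From mathcomp Require Import reals.
Set Implicit Arguments. Unset Strict Implicit. Unset Printing Implicit Defensive.
Import Order.TTheory GRing.Theory Num.Theory.
Local Open Scope ring_scope.

Definition dotv (R : realType) (m : nat) (u v : 'rV[R]_m) : R :=
  \sum_(i < m) u 0 i * v 0 i.

(* Number of generalized Gell-Mann observables per site: d^2 - 1. *)
Definition ngm (d : nat) : nat := (d ^ 2 - 1)%N.

Definition qmdc_feasible (R : realType) (d n m : nat)
    (x : 'I_(ngm d) -> 'I_n -> 'rV[R]_m) : Prop :=
  forall (u : 'I_n) (a b : 'I_(ngm d)),
    dotv (x a u) (x b u) = (if a == b then 2 / d%:R else 0).

Definition qmdc_obj (R : realType) (d n m : nat)
    (x : 'I_(ngm d) -> 'I_n -> 'rV[R]_m) : R :=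
  2^-1 * ((d%:R - 1) / d%:R)
  - 4^-1 * \sum_(a < ngm d)
      ('C(n, 2)%:R)^-1 * \sum_(u < n) \sum_(v < n | (u < v)%N) dotv (x a u) (x a v).

(* Main.v *)
Require Import Defs.
From HB Require Import structures.
From mathcomp Require Import all_boot all_order all_algebra.
From mathcomp Require Import reals ring lra.
Import Order.TTheory GRing.Theory Num.Theory.
Local Open Scope ring_scope.

Lemma sq_sum (R : realType) n (y : 'I_n -> R) :
  (\sum_(u < n) y u) ^+ 2 = \sum_(u < n) y u ^+ 2 + 2 * \sum_(u < n) \sum_(v < n | (u < v)%N) y u * y v.
Proof.
rewrite expr2 mulr_suml.
under eq_bigr => u _ do rewrite mulr_sumr.
have split3 : forall u v : 'I_n, y u * y v =
   (if (u < v)%N then y u * y v else 0) + (if (v < u)%N then y v * y u else 0)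
   + (if v == u then y u * y v else 0).
  move=> u v; case: (ltngtP u v) => h.
  - have e1 : (v < u)%N = false by rewrite ltnNge ltnW.
    have e2 : (v == u) = false by apply/negbTE; rewrite -(inj_eq val_inj) /= neq_ltn h orbT.
    by rewrite e2 !addr0.
  - have e1 : (u < v)%N = false by rewrite ltnNge ltnW.
    have e2 : (v == u) = false by apply/negbTE; rewrite -(inj_eq val_inj) /= neq_ltn h.
    by rewrite e2 add0r addr0 mulrC.
  - have e : u = v by apply: val_inj.
    by subst v; rewrite eqxx !add0r.
under eq_bigr => u _ do rewrite (eq_bigr _ (fun v _ => split3 u v)) !big_split /=.
rewrite !big_split /=.
have h1 : \sum_(u < n) \sum_(v < n) (if (v < u)%N then y v * y u else 0) = \sum_(u < n) \sum_(v < n | (u < v)%N) y u * y v.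
  rewrite exchange_big /=; apply: eq_bigr => u _; by rewrite -big_mkcond.
have h0 : \sum_(u < n) \sum_(v < n) (if (u < v)%N then y u * y v else 0) = \sum_(u < n) \sum_(v < n | (u < v)%N) y u * y v.
  by apply: eq_bigr => u _; rewrite -big_mkcond.
have h2 : \sum_(u < n) \sum_(v < n) (if v == u then y u * y v else 0) = \sum_(u < n) y u ^+ 2.
  by apply: eq_bigr => u _; rewrite -big_mkcond big_pred1_eq expr2.
rewrite h0 h1 h2.
ring.
Qed.

Lemma dot_mxvec (R : realType) p q (A B : 'M[R]_(p, q)) :
  dotv (mxvec A) (mxvec B) = \sum_i \sum_j A i j * B i j.
Proof.
rewrite /dotv (reindex _ (curry_mxvec_bij _ _)) /= pair_bigA.
by apply: eq_bigr => -[i j] _ /=; rewrite !mxvecE.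
Qed.

Lemma key (R : realType) m n (z : 'I_n -> 'rV[R]_m) :
 \sum_(i < m) (\sum_(u < n) z u 0 i) ^+ 2 = \sum_(u < n) dotv (z u) (z u)
   + 2 * \sum_(u < n) \sum_(v < n | (u < v)%N) dotv (z u) (z v).
Proof.
under eq_bigr => i _ do rewrite sq_sum.
rewrite big_split /= -mulr_sumr.
congr (_ + 2 * _).
- rewrite exchange_big; apply: eq_bigr => u _; rewrite /dotv; apply: eq_bigr => i _; by rewrite expr2.
- rewrite exchange_big; apply: eq_bigr => u _ /=. rewrite exchange_big /=.
  by apply: eq_bigr => v _; rewrite /dotv.
Qed.

Lemma sum_delta (R : realType) n (u : 'I_n) (G : 'I_n -> R) :
  \sum_(j < n) (j == u)%:R * G j = G u.
Proof.
rewrite (bigD1 u) //= eqxx mul1r big1 ?addr0 // => j /negbTE ->; by rewrite mul0r.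
Qed.

Lemma final_eq (R : realType) (d n : nat) : (2 <= d)%N -> (2 <= n)%N ->
  let t : R := - (n%:R * (2 / d%:R)) / 2 in
  2^-1 * ((d%:R - 1) / d%:R) - 4^-1 * \sum_(a < ngm d) (('C(n, 2)%:R)^-1 * t)
  = ((d%:R - 1) * (d%:R + n%:R)) / (2 * d%:R * (n%:R - 1)).
Proof.
move=> hd hn t; rewrite /t; clear t.
rewrite sumr_const card_ord.
have hc : ('C(n, 2)%:R : R) = n%:R * (n%:R - 1) / 2.
  have e2 : (n.-1%:R : R) = n%:R - 1 by case: n hn => // k _; rewrite -natr1 addrK.
  have := mul_bin_diag n 1; rewrite bin1 => /(congr1 (fun k => k%:R : R)).
  rewrite !natrM => e.
  by rewrite e2 in e; rewrite e; field.
have hg : ((ngm d)%:R : R) = d%:R ^+ 2 - 1.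
  by rewrite /ngm natrB ?natrX // expn_gt0 (leq_trans _ hd).
have dn0 : (d%:R : R) != 0 by rewrite pnatr_eq0 -lt0n (leq_trans _ hd).
have nn0 : (n%:R : R) != 0 by rewrite pnatr_eq0 -lt0n (leq_trans _ hn).
have n1 : (n%:R : R) - 1 != 0.
  by rewrite subr_eq0 (eqr_nat R n 1) eqn_leq negb_and -ltnNge hn.
rewrite -(mulr_natl _ (ngm d)) hg hc.
field.
by rewrite dn0 nn0 n1.
Qed.

Theorem mainTheorem15 (R : realType) (d n : nat) :
  (2 <= d)%N -> (2 <= n)%N ->
  let val : R := ((d%:R - 1) * (d%:R + n%:R)) / (2 * d%:R * (n%:R - 1)) in
  (forall (m : nat) (x : 'I_(ngm d) -> 'I_n -> 'rV[R]_m),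
      qmdc_feasible x -> qmdc_obj x <= val) /\
  (exists (m : nat) (x : 'I_(ngm d) -> 'I_n -> 'rV[R]_m),
      qmdc_feasible x /\ qmdc_obj x = val).
Proof.
move=> hd hn val.
have dn0 : (d%:R : R) != 0 by rewrite pnatr_eq0 -lt0n (leq_trans _ hd).
have nn0 : (n%:R : R) != 0 by rewrite pnatr_eq0 -lt0n (leq_trans _ hn).
have n1 : (n%:R : R) - 1 != 0.
  by rewrite subr_eq0 (eqr_nat R n 1) eqn_leq negb_and -ltnNge hn.
have selfdot : forall m (x : 'I_(ngm d) -> 'I_n -> 'rV[R]_m), qmdc_feasible x ->
    forall a, \sum_(u < n) dotv (x a u) (x a u) = n%:R * (2 / d%:R).
  move=> m x fx a; rewrite (eq_bigr (fun _ => 2 / d%:R)) => [|u _]; last by rewrite fx eqxx.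
  by rewrite sumr_const card_ord (mulr_natl (2 / d%:R) n).
have Teq : forall m (x : 'I_(ngm d) -> 'I_n -> 'rV[R]_m), qmdc_feasible x -> forall a,
    \sum_(u < n) \sum_(v < n | (u < v)%N) dotv (x a u) (x a v)
    = ((\sum_(i < m) (\sum_(u < n) x a u 0 i) ^+ 2) - n%:R * (2 / d%:R)) / 2.
  by move=> m x fx a; rewrite (@key R m n (x a)) (selfdot m x fx a) [_ + 2 * _]addrC addrK mulrC mulKf // pnatr_eq0.
split.
  move=> m x fx; rewrite /qmdc_obj /val -(@final_eq R d n hd hn).
  rewrite lerD2l lerN2 ler_wpM2l // ?invr_ge0 //.
  apply: ler_sum => a _; apply: ler_wpM2l; first by rewrite invr_ge0 ler0n.
  rewrite Teq // ler_pM2r ?invr_gt0 // lerBrDr addNr.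
  by apply: sumr_ge0 => i _; apply: sqr_ge0.
pose s : R := Num.sqrt (2 * n%:R / (d%:R * (n%:R - 1))).
have s2 : s ^+ 2 = 2 * n%:R / (d%:R * (n%:R - 1)).
  rewrite sqr_sqrtr // divr_ge0 // ?mulr_ge0 ?ler0n // subr_ge0 ler1n (leq_trans _ hn) //.
pose A (a : 'I_(ngm d)) (u : 'I_n) : 'M[R]_(ngm d, n) :=
  \matrix_(i, j) ((i == a)%:R * (s * ((j == u)%:R - n%:R^-1))).
exists (ngm d * n)%N, (fun a u => mxvec (A a u)).
have fx : qmdc_feasible (fun a u => mxvec (A a u)).
  move=> u a b; rewrite dot_mxvec.
  under eq_bigr => i _ do under eq_bigr => j _ do rewrite !mxE.
  transitivity (\sum_(i < ngm d) (i == a)%:R * ((i == b)%:R * (s ^+ 2 * \sum_(j < n) ((j == u)%:R - n%:R^-1) ^+ 2))).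
    apply: eq_bigr => i _; rewrite !mulr_sumr; apply: eq_bigr => j _; ring.
  rewrite sum_delta.
  have K : \sum_(j < n) ((j == u)%:R - n%:R^-1) ^+ 2 = 1 - n%:R^-1 :> R.
    rewrite (eq_bigr (fun j => (j == u)%:R * ((j == u)%:R - 2 * n%:R^-1) + n%:R^-1 ^+ 2)); last first.
      by move=> j _; case: (j == u); ring.
    rewrite big_split /= sum_delta eqxx sumr_const card_ord -(mulr_natr (n%:R^-1 ^+ 2) n).
    have -> : (true%:R : R) = 1 by []. by field.
  rewrite K s2; case: (eqVneq a b) => _; last by rewrite mul0r.
  rewrite mul1r; field; by rewrite dn0 nn0 n1.
split => //.
rewrite /qmdc_obj /val -(@final_eq R d n hd hn); congr (_ - 4^-1 * _).
apply: eq_bigr => a _; congr (_ * _).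
rewrite (Teq _ (fun a u => mxvec (A a u)) fx a) /=.
have z : forall k, \sum_(u < n) mxvec (A a u) 0 k = 0.
  move=> k; case/mxvec_indexP: k => i j.
  under eq_bigr => u _ do rewrite mxvecE mxE.
  rewrite -mulr_sumr -mulr_sumr sumrB sumr_const card_ord.
  have -> : \sum_(u < n) ((j == u)%:R : R) = 1.
    rewrite (eq_bigr (fun u => (u == j)%:R * 1)) => [|u _]; last by rewrite eq_sym mulr1.
    by rewrite sum_delta.
  by rewrite -(mulr_natr (n%:R^-1) n) mulVf // subrr !mulr0.
under eq_bigr => k _ do rewrite z.
by rewrite big1 ?sub0r // => k _; rewrite expr2 mulr0.
Qed.
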